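(* Under the full cost model, the competitive ratio of the (offline-chosen) better algorithm among MTFE, MTFO and TS is at least $1.6$: for every $c<1.6$ and every constant $b$, there exist a list and a request sequence $\sigma$ with $\min\{\mathrm{TS}(\sigma),\mathrm{MTFO}(\sigma),\mathrm{MTFE}(\sigma)\}>c\cdot\mathrm{OPT}(\sigma)+b$.
   Context: Static list update: a list of $l$ distinct items in some initial order; serving a request to the item at position $i$ (from the front) costs $i$ (full cost model); the accessed item may be moved closer to the front for free; two adjacent items may be swapped at cost $1$. $A(\sigma)$ is the total cost of algorithm $A$ and $\mathrm{OPT}(\sigma)$ the minimum cost of any offline algorithm from the same initial list. MTFO moves a requested item to the front on the 1st, 3rd, 5th, ... request to that item; MTFE on the 2nd, 4th, 6th, ... request; otherwise they leave it in place. TS (Timestamp): on a request to item $x$, if $x$ has been requested before and some item preceding $x$ has been requested at most once since the previous request to $x$, then $x$ is moved to immediately in front of the frontmost such item; otherwise nothing moves. *)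

(* Defs.v *)
From mathcomp Require Import all_boot.
Set Implicit Arguments. Unset Strict Implicit. Unset Printing Implicit Defensive.

(* Items are natural numbers; a list configuration is a [seq nat] (uniq).
   Position of x (1-based) in L is [index x L + 1]: the full cost model. *)
Definition access_cost (x : nat) (L : seq nat) : nat := (index x L).+1.

Definition move_to_front (x : nat) (L : seq nat) : seq nat := x :: rem x L.

Definition insert_at (j x : nat) (L : seq nat) : seq nat :=
  take j L ++ x :: drop j L.

(* An online deterministic list-update rule: given the history of past
   requests [h], the current list [L] and the current request [x], return the
   new list (only free moves of x are used by MTFO/MTFE/TS). *)
Definition rule := seq nat -> seq nat -> nat -> seq nat.

Fixpoint run_from (A : rule) (h L s : seq nat) : nat :=
  match s with
  | [::] => 0
  | x :: s' => access_cost x L + run_from A (rcons h x) (A h L x) s'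
  end.

Definition cost (A : rule) (L sigma : seq nat) : nat := run_from A [::] L sigma.

(* MTFO: move to front on the 1st, 3rd, 5th, ... request to x,
   i.e. when the number of previous requests to x is even. *)
Definition MTFO : rule := fun h L x =>
  if ~~ odd (count_mem x h) then move_to_front x L else L.

(* MTFE: move to front on the 2nd, 4th, 6th, ... request to x. *)
Definition MTFE : rule := fun h L x =>
  if odd (count_mem x h) then move_to_front x L else L.

(* Requests strictly after the previous request to x (in reverse order,
   which is irrelevant since only counts are used). *)
Definition since_last (x : nat) (h : seq nat) : seq nat :=
  take (index x (rev h)) (rev h).

Definition TS : rule := fun h L x =>
  if x \in h then
    let w := since_last x h in
    let pre := take (index x L) L in
    let P := fun y => count_mem y w <= 1 in
    if has P pre then
      (* frontmost such item y, at 0-based position i = find P pre;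
         x is moved immediately in front of it *)
      insert_at (find P pre) x (rem x L)
    else L
  else L.

(* Before serving each request, the algorithm performs
   an arbitrary sequence of paid adjacent transpositions (cost 1 each); the
   transposition [i] swaps the items at 0-based positions i and i+1 (if
   i+1 is out of range it has no effect but still costs 1, which is never
   beneficial); then it pays the access cost; then it may move the accessed
   item for free to any 0-based position j not beyond its current one
   (j is clamped to the current position). *)
Definition swap_adj (i : nat) (L : seq nat) : seq nat :=
  if i.+1 < size L then
    take i L ++ [:: nth 0 L i.+1; nth 0 L i] ++ drop i.+2 L
  else L.

Definition apply_swaps (sw : seq nat) (L : seq nat) : seq nat :=
  foldl (fun L i => swap_adj i L) L sw.

Definition free_move (j x : nat) (L : seq nat) : seq nat :=
  insert_at (minn j (index x L)) x (rem x L).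

(* A schedule gives, for each request, (paid swaps, target position).
   Missing entries default to (no swaps, move to front), itself a legal action. *)
Definition action := (seq nat * nat)%type.

Fixpoint offline_cost (L s : seq nat) (S : seq action) : nat :=
  match s with
  | [::] => 0
  | x :: s' =>
      let a := head ([::], 0) S in
      let L1 := apply_swaps a.1 L in
      size a.1 + access_cost x L1 +
      offline_cost (free_move a.2 x L1) s' (behead S)
  end.

Definition is_OPT (L sigma : seq nat) (n : nat) : Prop :=
  (exists S, offline_cost L sigma S = n) /\
  (forall S, n <= offline_cost L sigma S).

(* Main.v *)
Require Import Defs.
From mathcomp Require Import all_boot.
From Stdlib Require Import Reals Lra Classical.

Set Implicit Arguments. Unset Strict Implicit. Unset Printing Implicit Defensive.

Fixpoint fin (A : rule) (h L s : seq nat) : seq nat :=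
  match s with
  | [::] => L
  | x :: s' => fin A (rcons h x) (A h L x) s'
  end.

Lemma run_cat A s1 s2 h L :
  run_from A h L (s1 ++ s2) =
  run_from A h L s1 + run_from A (h ++ s1) (fin A h L s1) s2.
Proof.
elim: s1 h L => [|x s1 IH] h L /=; first by rewrite cats0.
by rewrite IH addnA cat_rcons.
Qed.

Definition hist_inv (A : rule) := forall h0 q L x,
  (forall y, ~~ odd (count_mem y h0)) -> x \in q -> A (h0 ++ q) L x = A q L x.

Lemma run_hist A h0 : hist_inv A -> (forall y, ~~ odd (count_mem y h0)) ->
  forall s q L, {subset s <= q} -> run_from A (h0 ++ q) L s = run_from A q L s.
Proof.
move=> HA Hh; elim=> [|x s IH] q L Hs //=.
have xq : x \in q by apply: Hs; rewrite inE eqxx.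
rewrite HA // rcons_cat IH // => y ys.
by rewrite mem_rcons inE Hs ?orbT // inE ys orbT.
Qed.

Lemma mem_flat_nseq (P : seq nat) k : {subset flatten (nseq k P) <= P}.
Proof. elim: k => [|k IH] y //=; rewrite mem_cat => /orP [] // /IH. by []. Qed.

Lemma periodic A P X c : hist_inv A -> (forall y, ~~ odd (count_mem y P)) ->
  fin A P X P = X -> run_from A P X P = c ->
  forall k, run_from A P X (flatten (nseq k P)) = k * c.
Proof.
move=> HA HP Hf Hr; elim=> [|k IH] //.
rewrite /= run_cat Hf Hr run_hist //; last exact: mem_flat_nseq.
by rewrite IH mulSn.
Qed.

Lemma hist_MTFO : hist_inv MTFO.
Proof. by move=> h0 q L x H _; rewrite /MTFO count_cat oddD (negbTE (H x)). Qed.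

Lemma hist_MTFE : hist_inv MTFE.
Proof. by move=> h0 q L x H _; rewrite /MTFE count_cat oddD (negbTE (H x)). Qed.

Lemma hist_TS : hist_inv TS.
Proof.
move=> h0 q L x _ xq.
have E : since_last x (h0 ++ q) = since_last x q.
  rewrite /since_last rev_cat index_cat mem_rev xq take_cat.
  by rewrite index_mem mem_rev xq.
by rewrite /TS mem_cat xq orbT E.
Qed.

Fixpoint ofin (L s : seq nat) (S : seq action) : seq nat :=
  match s with
  | [::] => L
  | x :: s' =>
      let a := head ([::], 0) S in
      ofin (free_move a.2 x (apply_swaps a.1 L)) s' (behead S)
  end.

Lemma off_cat L s1 s2 S1 S2 : size S1 = size s1 ->
  offline_cost L (s1 ++ s2) (S1 ++ S2) =
  offline_cost L s1 S1 + offline_cost (ofin L s1 S1) s2 S2.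
Proof.
elim: s1 L S1 => [|x s1 IH] L [|a S1] //= [] Hs.
by rewrite IH // addnA.
Qed.

Lemma off_periodic P AP Y c : size AP = size P -> ofin Y P AP = Y ->
  offline_cost Y P AP = c ->
  forall k, offline_cost Y (flatten (nseq k P)) (flatten (nseq k AP)) = k * c.
Proof.
move=> Hs Hf Hc; elim=> [|k IH] //=.
by rewrite off_cat // Hf Hc IH mulSn.
Qed.

Lemma min_exists (P : nat -> Prop) n0 : P n0 ->
  exists n, P n /\ forall m, P m -> n <= m.
Proof.
move=> H0; apply: NNPP => Hn.
suff H : forall n m, m <= n -> ~ P m by exact: (H n0 n0 (leqnn _) H0).
elim=> [|n IH] m Hm Pm.
  apply: Hn; exists m; split => // k _.
  by move: Hm; rewrite leqn0 => /eqP ->.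
case: (leqP m n) => Hmn; first exact: (IH m Hmn Pm).
have Em : m = n.+1 by apply/eqP; rewrite eqn_leq Hm Hmn.
apply: Hn; exists m; split => // k Pk; rewrite leqNgt; apply/negP => hk.
by apply: (IH k) => //; rewrite -ltnS -Em.
Qed.

Definition l := 32.
Definition cA := 5280.
Definition cO := 3296.
Definition cO1 := 3792.

Definition L0 := iota 1 l.
Definition blk (d : bool) (m : nat) : seq nat :=
  flatten [seq nseq m x | x <- if d then rev L0 else L0].
Definition P1 := blk true 2 ++ blk false 2 ++ blk true 1.
Definition P2 := P1 ++ P1.
Definition A1 : seq action := nseq (4 * l) ([::], 0) ++ nseq l ([::], l).
Definition A2 := A1 ++ A1.
Definition sig k := P2 ++ flatten (nseq k P2).
Definition sch k := A2 ++ flatten (nseq k A2).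

Lemma P2_even y : ~~ odd (count_mem y P2).
Proof. by rewrite /P2 count_cat oddD addbb. Qed.

Lemma alg_bound A k : hist_inv A ->
  fin A P2 (fin A [::] L0 P2) P2 = fin A [::] L0 P2 ->
  run_from A P2 (fin A [::] L0 P2) P2 = cA ->
  k * cA <= cost A L0 (sig k).
Proof.
move=> HA Hf Hr; rewrite /cost /sig run_cat cat0s.
by rewrite (periodic HA P2_even Hf Hr) leq_addl.
Qed.

Lemma TS_f : fin TS P2 (fin TS [::] L0 P2) P2 = fin TS [::] L0 P2.
Proof. by vm_compute. Qed.
Lemma TS_r : run_from TS P2 (fin TS [::] L0 P2) P2 = cA.
Proof. by vm_compute. Qed.
Lemma MTFO_f : fin MTFO P2 (fin MTFO [::] L0 P2) P2 = fin MTFO [::] L0 P2.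
Proof. by vm_compute. Qed.
Lemma MTFO_r : run_from MTFO P2 (fin MTFO [::] L0 P2) P2 = cA.
Proof. by vm_compute. Qed.
Lemma MTFE_f : fin MTFE P2 (fin MTFE [::] L0 P2) P2 = fin MTFE [::] L0 P2.
Proof. by vm_compute. Qed.
Lemma MTFE_r : run_from MTFE P2 (fin MTFE [::] L0 P2) P2 = cA.
Proof. by vm_compute. Qed.

Lemma off_sA : size A2 = size P2. Proof. by vm_compute. Qed.
Lemma off_f : ofin (ofin L0 P2 A2) P2 A2 = ofin L0 P2 A2.
Proof. by vm_compute. Qed.
Lemma off_c : offline_cost (ofin L0 P2 A2) P2 A2 = cO.
Proof. by vm_compute. Qed.
Lemma off_c1 : offline_cost L0 P2 A2 = cO1.
Proof. by vm_compute. Qed.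

Lemma off_bound k : offline_cost L0 (sig k) (sch k) = cO1 + k * cO.
Proof.
rewrite /sig /sch off_cat ?off_sA // off_c1.
by rewrite (off_periodic off_sA off_f off_c).
Qed.

Lemma all_sig k : all (fun x => x \in L0) (sig k).
Proof.
rewrite /sig all_cat; apply/andP; split; first by vm_compute.
apply/allP => x /mem_flat_nseq xP.
by move: x xP; apply/allP; vm_compute.
Qed.

Lemma ER1 : INR cO1 = 3792%R. Proof. rewrite INR_IZR_INZ; reflexivity. Qed.
Lemma ER2 : INR cO = 3296%R. Proof. rewrite INR_IZR_INZ; reflexivity. Qed.
Lemma ER3 : INR cA = 5280%R. Proof. rewrite INR_IZR_INZ; reflexivity. Qed.
Opaque cA cO cO1.

Theorem theorem5 :
  forall c b : R, (c < 16 / 10)%R ->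
  exists (L sigma : seq nat) (opt : nat),
    uniq L /\ all (fun x => x \in L) sigma /\
    is_OPT L sigma opt /\
    (INR (minn (cost TS L sigma) (minn (cost MTFO L sigma) (cost MTFE L sigma)))
       > c * INR opt + b)%R.
Proof.
move=> c b Hc.
have [k Hk] := INR_unbounded (1000 + Rabs b)%R.
have [opt [[S HS] Hmin]] :=
  @min_exists (fun n => exists S, offline_cost L0 (sig k) S = n) _
    (ex_intro _ (sch k) erefl).
exists L0, (sig k), opt; split; first exact: iota_uniq.
split; first exact: all_sig.
split.
  split; first by exists S.
  by move=> S'; apply: Hmin; exists S'.
have Hopt : opt <= cO1 + k * cO by rewrite -off_bound; apply: Hmin; exists (sch k).
have Halg : k * cA <= minn (cost TS L0 (sig k))
              (minn (cost MTFO L0 (sig k)) (cost MTFE L0 (sig k))).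
  have h1 := alg_bound k hist_TS TS_f TS_r.
  have h2 := alg_bound k hist_MTFO MTFO_f MTFO_r.
  have h3 := alg_bound k hist_MTFE MTFE_f MTFE_r.
  rewrite leq_min; apply/andP; split; first exact: h1.
  rewrite leq_min; apply/andP; split; [exact: h2 | exact: h3].
have R1 := le_INR _ _ (elimT leP Halg).
have R2 := le_INR _ _ (elimT leP Hopt).
rewrite mult_INR in R1; rewrite plus_INR mult_INR in R2.
have O0 := pos_INR opt.
have K0 := pos_INR k.
set K := INR k in Hk R1 R2 K0; set O := INR opt in R2 O0 *.
set M := INR (minn _ _) in R1 *.
have Hco : (c * O <= Rmax c 0 * (INR cO1 + K * INR cO))%R.
  apply: Rle_trans (_ : Rmax c 0 * O <= _)%R.
    apply: Rmult_le_compat_r => //; apply: Rmax_l.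
  apply: Rmult_le_compat_l => //; apply: Rmax_r.
have Hm : (Rmax c 0 <= 16/10)%R by apply: Rmax_lub; lra.
have Hb : (b <= Rabs b)%R by apply: Rle_abs.
have E1 : INR cO1 = 3792%R by exact: ER1.
have E2 : INR cO = 3296%R by exact: ER2.
have E3 : INR cA = 5280%R by exact: ER3.
rewrite E1 E2 in Hco; rewrite E3 in R1.
have : (Rmax c 0 * (3792 + K * 3296) <= 16/10 * (3792 + K * 3296))%R.
  apply: Rmult_le_compat_r => //; lra.
move=> HH; have := Rabs_pos b; lra.
Qed.
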